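(* Let $d\ge 1$ be an odd integer, $p\ge 0$ an integer, and $M\ge 1$ an integer with $2M+1\ge d+p+1$. Let $\gamma:[0,\pi]\to[0,\infty)$ be an integrable weighting function that is positive on a subset of $[0,\pi]$ of positive measure. For $\mathbf a=(a_{-M},\dots,a_M)\in\mathbb R^{2M+1}$ define the spectral error $$e(\eta)=\sum_{m=-M}^{M}a_m e^{jm\eta}-(j\eta)^d,\qquad \eta\in[0,\pi],\ j=\sqrt{-1}.$$ Let $\mathbf a^\ast$ be a minimizer of $$\int_0^\pi \gamma(\eta)\,|e(\eta)|^2\,d\eta$$ over all $\mathbf a\in\mathbb R^{2M+1}$ satisfying the order-of-accuracy constraints $$\sum_{m=-M}^{M} m^q a_m=\begin{cases}0,& q\neq d,\\ d!,& q=d,\end{cases}\qquad q=0,1,\dots,d+p .$$ Then the spectral error of $\mathbf a^\ast$ satisfies $\operatorname{Re}[e(\eta)]=0$ for all $\eta\in[0,\pi]$ (equivalently $\sum_m a^\ast_m\cos(m\eta)\equiv 0$).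
   Context: This concerns explicit finite difference approximations $f^{(d)}(x_i)\approx (\Delta x)^{-d}\sum_{m=-M}^{M}a_m f(x_i+m\Delta x)$ of the $d$-th derivative on a uniform grid with spacing $\Delta x$; $\eta=k\Delta x$ is the normalized wavenumber. The constraints express that the approximation has truncation error of order $p+1$. Here $0^0=1$. *)

(* Defs.v *)
From mathcomp Require Import all_boot all_algebra.
From mathcomp Require Export complex.
From mathcomp Require Import all_classical all_reals all_analysis.
Import GRing.Theory Num.Theory.
Set Implicit Arguments.
Unset Strict Implicit.
Unset Printing Implicit Defensive.
Local Open Scope ring_scope.

(* Stencil index: coefficient a i : 'I_(2M+1) is a_m with m = i - M. *)
Definition stencil_m {M : nat} (i : 'I_(2 * M + 1)) : int := (i%:Z - M%:Z)%R.

Definition cexpi (R : realType) (t : R) : R[i] := (Complex (cos t) (sin t)).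

Definition spectral_error (R : realType) (M d : nat)
    (a : 'I_(2 * M + 1) -> R) (eta : R) : R[i] :=
  (\sum_(i < 2 * M + 1)
      ((a i)%:C * cexpi ((stencil_m (M:=M) i)%:~R * eta)) - ('i * eta%:C) ^+ d)%C.

Definition cabs2 (R : realType) (z : R[i]) : R :=
  complex.Re z ^+ 2 + complex.Im z ^+ 2.

Definition spectral_cost (R : realType) (M d : nat) (gamma : R -> R)
    (a : 'I_(2 * M + 1) -> R) : \bar R :=
  (\int[@lebesgue_measure R]_(x in `[0%R, pi]%classic)
      (gamma x * cabs2 (spectral_error d a x))%:E)%E.

(* Order-of-accuracy constraints for q = 0..d+p (with 0^0 = 1). *)
Definition accuracy_constraints (R : realType) (M d p : nat)
    (a : 'I_(2 * M + 1) -> R) : Prop :=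
  forall q : nat, (q <= d + p)%N ->
    \sum_(i < 2 * M + 1) ((stencil_m (M:=M) i)%:~R ^+ q * a i) =
      (if q == d then (d`!)%:R else 0 : R).

(* Main.v *)
Require Import Defs.
From mathcomp Require Import all_boot all_algebra.
From mathcomp Require Import complex.
From mathcomp Require Import all_classical all_reals all_analysis.
From mathcomp Require Import ring lra zify.
From mathcomp Require Import finmap measurable_realfun.
Import mathcomp.order.order.Order.TTheory GRing.Theory Num.Theory.
Local Open Scope ring_scope.

Section Aux.
Variable R : realType.
Local Open Scope complex_scope.
Local Open Scope classical_set_scope.

Fixpoint cheb (n : nat) : {poly R} :=
  match n with
  | 0 => 1
  | 1 => 'X
  | S (S k as k1) => 2%:P * 'X * cheb k1 - cheb k
  end.

Lemma cheb_cos n x : (cheb n).[cos x] = cos (n%:R * x).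
Proof.
suff : (cheb n).[cos x] = cos (n%:R * x) /\ (cheb n.+1).[cos x] = cos (n.+1%:R * x) by case.
elim: n => [|n [IH1 IH2]].
  rewrite /= !hornerE cos0; split => //; rewrite ?mul1r //=.
split => //.
rewrite /= hornerD hornerN !hornerM IH1 IH2 !hornerE.
have h1 : n.+2%:R * x = n.+1%:R * x + x by rewrite -[in LHS](addn1 n.+1) natrD mulrDl mul1r.
have h2 : n%:R * x = n.+1%:R * x + - x by rewrite -[in RHS](addn1 n) natrD mulrDl mul1r addrK.
rewrite h1 h2 !cosD cosN sinN; lra.
Qed.

Lemma cos_int (m : int) x : cos (m%:~R * x) = (cheb `|m|%N).[cos x].
Proof.
rewrite cheb_cos; case: m => n /=; first by [].
by rewrite NegzE mulrNz mulNr cosN.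
Qed.

Lemma ReD (x y : R[i]) : complex.Re (x + y) = complex.Re x + complex.Re y.
Proof. by case: x; case: y. Qed.
Lemma ImD (x y : R[i]) : complex.Im (x + y) = complex.Im x + complex.Im y.
Proof. by case: x; case: y. Qed.
Lemma ReN (x : R[i]) : complex.Re (- x) = - complex.Re x.
Proof. by case: x. Qed.
Lemma ImN (x : R[i]) : complex.Im (- x) = - complex.Im x.
Proof. by case: x. Qed.

Lemma i_pow_k (k : nat) (x : R) :
  (Complex 0 1 * x%:C) ^+ k.*2.+1 = Complex 0 ((-1) ^+ k * x ^+ k.*2.+1) :> R[i].
Proof.
elim: k => [|k IH]; first by rewrite expr1 /= expr0 mul1r; apply/eqP; rewrite eq_complex /=; apply/andP; split; apply/eqP; ring.
rewrite doubleS exprS exprS IH /=.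
apply/eqP; rewrite eq_complex /=; apply/andP; split; apply/eqP; rewrite ?exprS; ring.
Qed.

Lemma i_pow (d : nat) (x : R) : odd d ->
  (Complex 0 1 * x%:C) ^+ d = Complex 0 ((-1) ^+ d./2 * x ^+ d) :> R[i].
Proof.
move=> hd.
have -> : d = (d./2).*2.+1 by rewrite -[in LHS](odd_double_half d) hd.
by rewrite i_pow_k /= uphalf_double.
Qed.

Lemma Re_sum (I : finType) (F : I -> R[i]) :
  complex.Re (\sum_(i : I) F i) = \sum_(i : I) complex.Re (F i).
Proof. exact: (big_morph _ ReD). Qed.
Lemma Im_sum (I : finType) (F : I -> R[i]) :
  complex.Im (\sum_(i : I) F i) = \sum_(i : I) complex.Im (F i).
Proof. exact: (big_morph _ ImD). Qed.

Lemma Re_se (M d : nat) (b : 'I_(2 * M + 1) -> R) (eta : R) : odd d ->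
  complex.Re (spectral_error d b eta) =
  \sum_i b i * cos ((stencil_m i)%:~R * eta).
Proof.
move=> hd; rewrite /spectral_error ReD ReN i_pow // Re_sum /= subr0.
by apply: eq_bigr => i _; rewrite /cexpi /=; ring.
Qed.

Lemma Im_se (M d : nat) (b : 'I_(2 * M + 1) -> R) (eta : R) : odd d ->
  complex.Im (spectral_error d b eta) =
  \sum_i b i * sin ((stencil_m i)%:~R * eta) - (-1) ^+ d./2 * eta ^+ d.
Proof.
move=> hd; rewrite /spectral_error ImD ImN i_pow // Im_sum /=.
by congr (_ - _); apply: eq_bigr => i _; rewrite /cexpi /=; ring.
Qed.

Lemma stencil_rev M (i : 'I_(2 * M + 1)) :
  stencil_m (rev_ord i) = - stencil_m i.
Proof.
rewrite /stencil_m /=; have := ltn_ord i; move=> hi.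
lia.
Qed.

Lemma sum_refl {M} (a : 'I_(2 * M + 1) -> R) (h : int -> R) :
  \sum_i h (stencil_m i) * a (rev_ord i) = \sum_i h (- stencil_m i) * a i.
Proof.
rewrite (reindex_inj rev_ord_inj) /=; apply: eq_bigr => i _.
by rewrite rev_ordK stencil_rev.
Qed.

Definition tpart {M} (a : 'I_(2 * M + 1) -> R) i := (a i - a (rev_ord i)) / 2.

Lemma tpart_feas M d p (a : 'I_(2 * M + 1) -> R) : odd d ->
  accuracy_constraints d p a -> accuracy_constraints d p (tpart a).
Proof.
move=> hd ha q hq; have := ha q hq.
have E : \sum_i (stencil_m i)%:~R ^+ q * tpart a i =
  (\sum_i (stencil_m i)%:~R ^+ q * a i - \sum_i (stencil_m i)%:~R ^+ q * a (rev_ord i)) / 2.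
  rewrite -sumrB mulr_suml; apply: eq_bigr => i _; rewrite /tpart; ring.
rewrite E (sum_refl (M:=M) a (fun m => m%:~R ^+ q)).
under [X in _ - X]eq_bigr => i _ do rewrite intrN exprNn -mulrA.
rewrite -mulr_sumr.
case: (boolP (odd q)) => hq'.
  rewrite -signr_odd hq' expr1 mulN1r opprK => ->.
  by set v := (if _ then _ else _); field.
rewrite -(signr_odd _ q) (negbTE hq') expr0 mul1r subrr mul0r.
have -> : (q == d) = false by apply/negbTE; apply: contraNneq hq' => ->.
by [].
Qed.

Lemma Re_tpart M d (a : 'I_(2 * M + 1) -> R) eta : odd d ->
  complex.Re (spectral_error d (tpart a) eta) = 0.
Proof.
move=> hd; rewrite Re_se //.
have E : \sum_i tpart a i * cos ((stencil_m i)%:~R * eta) =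
  (\sum_i cos ((stencil_m i)%:~R * eta) * a i -
   \sum_i cos ((stencil_m i)%:~R * eta) * a (rev_ord i)) / 2.
  rewrite -sumrB mulr_suml; apply: eq_bigr => i _; rewrite /tpart; ring.
rewrite E (sum_refl (M:=M) a (fun m => cos (m%:~R * eta))).
under [X in _ - X]eq_bigr => i _ do rewrite intrN mulNr cosN.
by rewrite subrr mul0r.
Qed.

Lemma Im_tpart M d (a : 'I_(2 * M + 1) -> R) eta : odd d ->
  complex.Im (spectral_error d (tpart a) eta) =
  complex.Im (spectral_error d a eta).
Proof.
move=> hd; rewrite !Im_se //; congr (_ - _).
have E : \sum_i tpart a i * sin ((stencil_m i)%:~R * eta) =
  (\sum_i sin ((stencil_m i)%:~R * eta) * a i -
   \sum_i sin ((stencil_m i)%:~R * eta) * a (rev_ord i)) / 2.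
  rewrite -sumrB mulr_suml; apply: eq_bigr => i _; rewrite /tpart; ring.
rewrite E (sum_refl (M:=M) a (fun m => sin (m%:~R * eta))).
under [X in _ - X]eq_bigr => i _ do rewrite intrN mulNr sinN mulNr.
rewrite sumrN opprK.
under eq_bigr => i _ do rewrite mulrC.
by set v := \sum_i _; field.
Qed.

Lemma poly_zero_of_pos (Q : {poly R}) (A N : set (measurableTypeR R)) :
  measurable A -> measurable N -> (lebesgue_measure N = 0)%E ->
  (0 < lebesgue_measure A)%E ->
  (forall x, A x -> 0 <= x <= pi) ->
  (forall x, A x -> ~ N x -> Q.[cos x] = 0) -> Q = 0.
Proof.
move=> mA mN N0 Apos A0pi AQ; apply/eqP/negPn/negP => Q0.
have fin : finite_set (A `\` N).
  apply: contrapT => /(infinite_set_fset (size Q)) [B BA szB].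
  have : (size (map cos (enum_fset B)) < size Q)%N.
    apply: max_poly_roots => //.
      apply/allP => y /mapP [x xB ->]; apply/rootP.
      by have [] := BA x xB; apply: AQ.
    rewrite map_inj_in_uniq ?fset_uniq // => x y xB yB.
    apply: cos_inj; rewrite in_itv /=; [exact: A0pi (BA x xB).1| exact: A0pi (BA y yB).1].
  by rewrite size_map ltnNge szB.
have E : (lebesgue_measure A = lebesgue_measure (A `\` N) + lebesgue_measure (A `&` N))%E.
  exact: measureDI.
have E1 : lebesgue_measure (A `\` N) = 0%E.
  exact/countable_lebesgue_measure0/finite_set_countable.
have E2 : lebesgue_measure (A `&` N) = 0%E.
  apply: (subset_measure0 _ _ _ N0) => //; exact: measurableI.
by move: Apos; rewrite E E1 E2 adde0 ltxx.
Qed.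

End Aux.
Arguments tpart {R M}.
Arguments tpart_feas {R M d p a}.

Theorem lemma2 (R : realType) (d p M : nat)
  (hd : odd d) (hM : (1 <= M)%N) (hMdp : (d + p + 1 <= 2 * M + 1)%N)
  (gamma : R -> R)
  (hgamma_nonneg : forall x : R, (0 <= x <= pi) -> 0 <= gamma x)
  (hgamma_int : (@lebesgue_measure R).-integrable
                  (`[0%R, pi%R])%classic (fun x : R => (gamma x)%:E))
  (hgamma_pos : (0 < @lebesgue_measure R
                   ([set x : R | (0 <= x <= pi)%R /\ (0 < gamma x)%R])%classic)%E)
  (astar : 'I_(2 * M + 1) -> R)
  (hfeas : accuracy_constraints d p astar)
  (hmin : forall b : 'I_(2 * M + 1) -> R, accuracy_constraints d p b ->
            (spectral_cost d gamma astar <= spectral_cost d gamma b)%E) :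
  forall eta : R, 0 <= eta <= pi ->
    complex.Re (spectral_error d astar eta) = 0.
Proof.
move=> eta heta.
pose D : set (measurableTypeR R) := `[0%R, pi%R]%classic.
have mD : measurable D by exact: measurable_itv.
have mgam : measurable_fun D gamma.
  by move/integrableP: hgamma_int => [/measurable_EFinP].
pose f := fun x => complex.Re (spectral_error d astar x).
pose g := fun x => complex.Im (spectral_error d astar x).
pose Qa := \sum_i astar i *: cheb R `|stencil_m i|%N.
have fQ : forall x, f x = Qa.[cos x].
  move=> x; rewrite /f Re_se // horner_sum; apply: eq_bigr => i _.
  by rewrite hornerZ cos_int.
have mf : measurable_fun D f.
  have -> : f = (fun x => Qa.[cos x]) by apply/funext => x; exact: fQ.
  apply: measurableT_comp; first exact: continuous_measurable_fun (continuous_horner (p:=Qa)).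
  exact: measurable_funS measurableT (@subsetT _ D) (continuous_measurable_fun (@continuous_cos R)).
have mg : measurable_fun D g.
  have -> : g = (fun x => \sum_i astar i * sin ((stencil_m i)%:~R * x) - (-1) ^+ d./2 * x ^+ d).
    by apply/funext => x; rewrite /g Im_se.
  apply: measurable_funB.
    apply: measurable_sum => i; apply: measurable_funM; first exact: measurable_cst.
    apply: measurableT_comp; first exact: continuous_measurable_fun (@continuous_sin R).
    by apply: measurable_funM; [exact: measurable_cst|exact: measurable_id].
  by apply: measurable_funM; [exact: measurable_cst|exact: exprn_measurable].
pose c := \sum_i `|astar i| + pi ^+ d.
have gb : forall x, D x -> `|g x| <= c.
  move=> x; rewrite /D /= in_itv /= => /andP [x0 xpi].
  rewrite /g Im_se //.
  apply: (le_trans (ler_normB _ _)); apply: lerD.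
    apply: (le_trans (ler_norm_sum _ _ _)); apply: ler_sum => i _.
    rewrite normrM; apply: ler_piMr => //.
    by rewrite ler_norml sin_geN1 sin_le1.
  rewrite normrM normrX normrN1 expr1n mul1r normrX ger0_norm //.
  by apply: lerXn2r; rewrite // nnegrE (le_trans x0).
have mg2 : measurable_fun (T := measurableTypeR R) D (fun x => g x ^+ 2).
  exact: (measurable_funX 2 mg).
have bg2 : [bounded g x ^+ 2 | x in D].
  exists (c ^+ 2); split; first exact: num_real.
  move=> B cB x Dx /=; apply: ltW; apply: le_lt_trans cB.
  rewrite normrX; apply: lerXn2r; rewrite ?nnegrE ?normr_ge0 ?gb //.
  exact: le_trans (normr_ge0 _) (gb x Dx).
have gam0 : forall x, D x -> 0 <= gamma x.
  by move=> x; rewrite /D /= in_itv /= => /hgamma_nonneg.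
pose F := fun x => (gamma x * f x ^+ 2)%R.
pose G := fun x => (gamma x * g x ^+ 2)%R.
have intG : lebesgue_measure.-integrable D (fun x => (G x)%:E).
  have -> : (fun x => (G x)%:E) =
     ((fun x => (gamma x)%:E) \* (EFin \o (fun x => (g x ^+ 2)%R)))%E.
    by apply/funext => x /=; rewrite EFinM.
  have := integrableMl mD hgamma_int mg2 bg2.
  done.
have finG := integrable_fin_num mD intG.
have mF : measurable_fun D (fun x => (F x)%:E).
  by apply/measurable_EFinP; apply: measurable_funM => //; exact: measurable_funX.
have mG : measurable_fun D (fun x => (G x)%:E).
  by apply/measurable_EFinP; apply: measurable_funM => //.
have Ca : spectral_cost d gamma astar =
   (\int[lebesgue_measure]_(x in D) (F x)%:E +
    \int[lebesgue_measure]_(x in D) (G x)%:E)%E.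
  rewrite /spectral_cost -ge0_integralD //; last 2 first.
  - by move=> x Dx; rewrite lee_fin mulr_ge0 ?gam0 ?sqr_ge0.
  - by move=> x Dx; rewrite lee_fin mulr_ge0 ?gam0 ?sqr_ge0.
  by apply: eq_integral => x _; rewrite /cabs2 -EFinD mulrDr.
have Ct : spectral_cost d gamma (tpart astar) =
    (\int[lebesgue_measure]_(x in D) (G x)%:E)%E.
  apply: eq_integral => x _; rewrite /cabs2 Re_tpart // Im_tpart //.
  by rewrite expr2 mul0r add0r.
have le := hmin (tpart astar) (tpart_feas hd hfeas).
have F0 : (\int[lebesgue_measure]_(x in D) (F x)%:E = 0)%E.
  have : (\int[lebesgue_measure]_(x in D) (F x)%:E +
          \int[lebesgue_measure]_(x in D) (G x)%:E <=
          0 + \int[lebesgue_measure]_(x in D) (G x)%:E)%E.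
    by rewrite add0e -Ca -Ct.
  rewrite leeD2rE // => Fle; apply/eqP; rewrite eq_le Fle /=.
  by apply: integral_ge0 => x Dx; rewrite lee_fin mulr_ge0 ?gam0 ?sqr_ge0.
have := (ae_eq_integral_abs lebesgue_measure mD mF).1.
case.
  rewrite -[RHS]F0; apply: eq_integral => x /set_mem Dx.
  by apply: gee0_abs; rewrite lee_fin mulr_ge0 ?gam0 ?sqr_ge0.
move=> N [mN N0 sub].
pose A := [set x : measurableTypeR R | (0 <= x <= pi)%R /\ (0 < gamma x)%R]%classic.
have mA : measurable A.
  have -> : A = (D `&` gamma @^-1` `]0%R, +oo[)%classic.
    apply/seteqP; split => x /=; rewrite /D /= !in_itv /= andbT //.
  exact: mgam mD _ (measurable_itv _).
have QZ : Qa = 0.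
  apply: (@poly_zero_of_pos R Qa A N mA mN N0 hgamma_pos).
    by move=> x [].
  move=> x [xr gpos] nN.
  have hx : D x -> (F x)%:E = 0%E.
    by apply: contrapT => H; apply: nN; apply: sub.
  have := hx; rewrite /D /= in_itv /= => /(_ xr) [].
  rewrite /F => /eqP; rewrite mulf_eq0 (gt_eqF gpos) /= sqrf_eq0 => /eqP.
  by rewrite fQ.
by rewrite -/(f eta) fQ QZ horner0.
Qed.
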